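(* Let $\mathcal T$ be a tube. If $S_1,S_2$ are two non-isomorphic simple objects of $\mathcal T$ with $\mathrm{Ext}^1_{\mathcal T}(S_1,S_2)=0$, then there exists an object $M$ of $\mathcal T$ such that $\mathrm{Ext}^1_{\mathcal T}(S_1,M)\cong\Bbbk$, $\mathrm{Ext}^1_{\mathcal T}(M,S_2)\cong\Bbbk$, and $\{S_1,S_2,M\}$ is a brick set.
   Context: $\Bbbk$ is algebraically closed. A tube (of rank $r\ge1$) is the $\Bbbk$-linear abelian category of finite-dimensional nilpotent representations of the quiver with $r$ vertices forming an oriented cycle. A brick is an object $M$ with $\mathrm{Hom}(M,M)=\Bbbk$; a brick set is a finite set of bricks $\{X_1,\dots,X_n\}$ with $\dim\mathrm{Hom}(X_i,X_j)=\delta_{ij}$. *)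

(* Defs.v *)
From HB Require Import structures.
From mathcomp Require Import all_boot all_order all_algebra.
Set Implicit Arguments. Unset Strict Implicit. Unset Printing Implicit Defensive.
Import GRing.Theory.
Local Open Scope ring_scope.

(* Representations of the cyclic quiver with r vertices 0 -> 1 -> ... -> r-1 -> 0
   (arrow i -> ordS i) over a field K.  Vectors are row vectors: the arrow
   i -> i+1 acts by right multiplication with rmap i. *)
Record rep (K : fieldType) (r : nat) := Rep {
  rdim : 'I_r -> nat;
  rmap : forall i : 'I_r, 'M[K]_(rdim i, rdim (ordS i)) }.

Section Reps.
Variables (K : fieldType) (r : nat).
Implicit Types (M N : rep K r).

Fixpoint pathmx M (i : 'I_r) (k : nat) : 'M[K]_(rdim M i, rdim M (iter k (@ordS r) i)) :=
  match k with
  | 0 => 1%:M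
  | k'.+1 => pathmx M i k' *m rmap M (iter k' (@ordS r) i)
  end.

(* objects of the tube: finite-dimensional nilpotent representations *)
Definition nilpotent_rep M : Prop := exists n : nat, forall i : 'I_r, pathmx M i n = 0.

Definition is_hom M N (phi : forall i : 'I_r, 'M[K]_(rdim M i, rdim N i)) : Prop :=
  forall i : 'I_r, rmap M i *m phi (ordS i) = phi i *m rmap N i.

Definition is_iso M N : Prop :=
  exists (phi : forall i, 'M[K]_(rdim M i, rdim N i))
         (psi : forall i, 'M[K]_(rdim N i, rdim M i)),
    [/\ is_hom phi, is_hom psi,
        forall i, phi i *m psi i = 1%:M & forall i, psi i *m phi i = 1%:M].

Definition is_subrep M (U : forall i : 'I_r, 'M[K]_(rdim M i)) : Prop :=
  forall i : 'I_r, (U i *m rmap M i <= U (ordS i))%MS.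

Definition simple_rep M : Prop :=
  (exists i, 0 < rdim M i)%N /\
  forall U : forall i : 'I_r, 'M[K]_(rdim M i), is_subrep U -> (forall i, U i == 0) \/ (forall i, row_full (U i)).

(* Coordinates: the space of families (phi_i : M_i -> N_i)_i is K^(sum_i dM_i dN_i),
   and that of families (M_i -> N_(i+1))_i is K^(sum_i dM_i dN_(i+1)). *)
Definition famdim M N := (\sum_(i < r) rdim M i * rdim N i)%N.
Definition famdim1 M N := (\sum_(i < r) rdim M i * rdim N (ordS i))%N.

Definition famcomp M N (x : 'rV[K]_(famdim M N)) (i : 'I_r) : 'M[K]_(rdim M i, rdim N i) :=
  vec_mx (@submxrow K r (fun j => rdim M j * rdim N j)%N 1 x i).

(* the standard map  d(phi)_i = A_i phi_(i+1) - phi_i B_i ;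
   Hom(M,N) = ker d  and  Ext^1(M,N) = coker d  (standard resolution) *)
Definition dmap M N (x : 'rV[K]_(famdim M N)) : 'rV[K]_(famdim1 M N) :=
  @mxrow K r (fun j => rdim M j * rdim N (ordS j))%N 1
    (fun i => mxvec (rmap M i *m famcomp x (ordS i) - famcomp x i *m rmap N i)).

Definition dimHom M N : nat := \rank (kermx (lin1_mx (@dmap M N))).
Definition dimExt1 M N : nat := (famdim1 M N - \rank (lin1_mx (@dmap M N)))%N.

Definition brick M : Prop := dimHom M M = 1%N.

Definition zero_rep : rep K r := @Rep K r (fun _ => 0%N) (fun _ => 0).

Definition brick_set (s : seq (rep K r)) : Prop :=
  forall a b, (a < size s)%N -> (b < size s)%N ->
    dimHom (nth zero_rep s a)
           (nth zero_rep s b) = (a == b : nat).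
End Reps.

(* Main.v *)
Require Import Defs.
From mathcomp Require Import all_boot all_order all_algebra.
From HB Require Import structures.
From mathcomp Require Import zify.
Set Implicit Arguments. Unset Strict Implicit. Unset Printing Implicit Defensive.

Section Pos.
Variables (r : nat) (hr : 0 < r).

Lemma iter_ordS_val (i : 'I_r) k : val (iter k (@ordS r) i) = (i + k) %% r.
Proof.
elim: k => [|k IH] /=; first by rewrite addn0 modn_small.
by rewrite IH -addn1 modnDml -addnA addn1.
Qed.

Definition pos (s i : 'I_r) : nat := (i + (r - s)) %% r.

Lemma pos_lt s i : pos s i < r.
Proof. by rewrite /pos ltn_pmod. Qed.

Lemma iter_pos s j : iter (pos s j) (@ordS r) s = j.
Proof.
apply: val_inj; rewrite iter_ordS_val /pos modnDmr.
have -> : (s + (j + (r - s)) = j + r)%N by have := ltn_ord s; lia.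
by rewrite modnDr modn_small.
Qed.

Lemma pos_iter s k : pos s (iter k (@ordS r) s) = k %% r.
Proof.
rewrite /pos iter_ordS_val modnDml.
have -> : (s + k + (r - s) = k + r)%N by have := ltn_ord s; lia.
by rewrite modnDr.
Qed.

Lemma pos_ordS s i : pos s (ordS i) = (pos s i).+1 %% r.
Proof. by rewrite -{1}(iter_pos s i) -iterS pos_iter. Qed.

Lemma pos_inj s : injective (pos s).
Proof. by move=> i j E; rewrite -(iter_pos s i) E iter_pos. Qed.

Lemma pos_self s : pos s s = 0.
Proof. by have := pos_iter s 0; rewrite mod0n. Qed.

Lemma ordS_eq (i b : 'I_r) : (ordS i == b) = (i == ord_pred b).
Proof.
apply/eqP/eqP => [<-|->]; first by rewrite ordSK.
by rewrite ord_predK.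
Qed.

End Pos.

Import GRing.Theory.
Local Open Scope ring_scope.

Section Gen.
Variables (K : fieldType) (r : nat).
Implicit Types (M N : rep K r).

Lemma famcomp_mxrow M N (B : forall i, 'M[K]_(rdim M i, rdim N i)) i :
  famcomp (@mxrow K r (fun j => rdim M j * rdim N j)%N 1 (fun j => mxvec (B j))) i = B i.
Proof. by rewrite /famcomp mxrowK mxvecK. Qed.

Lemma famcompP M N a (x y : 'rV[K]_(famdim M N)) i :
  famcomp (a *: x + y) i = a *: famcomp x i + famcomp y i.
Proof. by rewrite /famcomp /submxrow !linearP. Qed.

Lemma submxrowZ M N a (x : 'rV[K]_(famdim1 M N)) i :
  @submxrow K r (fun j => rdim M j * rdim N (ordS j))%N 1 (a *: x) i = a *: submxrow x i.
Proof. by rewrite /submxrow linearZ. Qed.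

Lemma dmap_linear M N : linear (@dmap K r M N).
Proof.
move=> a x y; apply/mxrowP => i.
rewrite submxrowD submxrowZ !mxrowK !famcompP.
apply/(can_inj vec_mxK); rewrite linearP /= !mxvecK /famcomp !linearP /=.
rewrite !mxvecK mulmxDl -scalemxAl scalerBr opprD.
by rewrite addrACA.
Qed.

HB.instance Definition _ M N := GRing.isLinear.Build K _ _ _ (@dmap K r M N) (@dmap_linear M N).

Lemma dmap_eq0 M N (x : 'rV[K]_(famdim M N)) :
  dmap x = 0 <-> forall i, rmap M i *m famcomp x (ordS i) = famcomp x i *m rmap N i.
Proof.
split.
- move=> /mxrowP H i; move: (H i); rewrite mxrowK submxrow0.
  by move/eqP; rewrite mxvec_eq0 subr_eq0 => /eqP.
- move=> H; apply/mxrowP => i; rewrite mxrowK submxrow0 H subrr.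
  by apply/eqP; rewrite mxvec_eq0.
Qed.

Lemma dimHomE M N : dimHom M N = (famdim M N - \rank (lin1_mx (@dmap K r M N)))%N.
Proof. by rewrite /dimHom mxrank_ker. Qed.

Lemma dimHom_famdim0 M N : famdim M N = 0%N -> dimHom M N = 0%N.
Proof. by move=> H; rewrite dimHomE {1}H. Qed.

Lemma dimHom_famdim1_0 M N : famdim1 M N = 0%N -> dimHom M N = famdim M N.
Proof.
move=> H; rewrite dimHomE.
have := rank_leq_col (lin1_mx (@dmap K r M N)); lia.
Qed.

Lemma dimExt_famdim0 M N : famdim M N = 0%N -> dimExt1 M N = famdim1 M N.
Proof.
move=> H; rewrite /dimExt1.
have := rank_leq_row (lin1_mx (@dmap K r M N)); lia.
Qed.

Lemma dimHom1 M N (v : 'rV[K]_(famdim M N)) :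
  v != 0 -> dmap v = 0 ->
  (forall x : 'rV[K]_(famdim M N), dmap x = 0 -> (x <= v)%MS) ->
  dimHom M N = 1%N.
Proof.
move=> nz dv H; rewrite /dimHom; apply/eqP; rewrite eqn_leq; apply/andP; split.
- have: (kermx (lin1_mx (@dmap K r M N)) <= v)%MS.
    apply/row_subP => i; apply: H.
    move: (row_sub i (kermx (lin1_mx (@dmap K r M N)))) => /sub_kermxP; rewrite mul_rV_lin1; apply.
  move/mxrankS; rewrite rank_rV nz; done.
- have: (v <= kermx (lin1_mx (@dmap K r M N)))%MS by apply/sub_kermxP; rewrite mul_rV_lin1.
  by move/mxrankS; rewrite rank_rV nz.
Qed.

Lemma mx_dim0 m n (A : 'M[K]_(m, n)) : (m = 0)%N \/ (n = 0)%N -> A = 0.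
Proof. by case=> H; subst; [exact: flatmx0 | exact: thinmx0]. Qed.

Lemma simple_nil M : nilpotent_rep M -> simple_rep M ->
  exists a, (forall i, rdim M i = (i == a) :> nat) /\ (forall i, rmap M i = 0).
Proof.
move=> [n Hn] [[a ha] Hs].
have Hmap : forall i, rmap M i = 0.
  have Hsub : is_subrep (fun i => kermx (rmap M i)).
    by move=> i; rewrite mulmx_ker sub0mx.
  case: (Hs _ Hsub) => H.
  - have Hfree : forall i, row_free (rmap M i).
      move=> i; have := H i; rewrite -mxrank_eq0 mxrank_ker /row_free.
      have := rank_leq_row (rmap M i); lia.
    have Hp : forall k, \rank (pathmx M a k) = rdim M a.
      elim=> [|k IH] /=; first by rewrite mxrank1.
      by rewrite mxrankMfree // Hfree.
    by have := Hp n; rewrite Hn mxrank0; lia.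
  - move=> i; have := submx_full (1%:M : 'M[K]_(rdim M i)) (H i).
    by move/sub_kermxP; rewrite mul1mx.
exists a; split=> //.
pose U := fun i => ((i == a)%:R : K) *: (pid_mx 1 : 'M[K]_(rdim M i)).
have Hsub : is_subrep U by move=> i; rewrite Hmap mulmx0 sub0mx.
have Hr : \rank (pid_mx 1 : 'M[K]_(rdim M a)) = 1%N by rewrite rank_pid_mx.
case: (Hs _ Hsub) => H.
- by have := H a; rewrite /U eqxx scale1r -mxrank_eq0 Hr.
- move=> i; have := H i; rewrite /U /row_full.
  case: (eqVneq i a) => [->|ne]; first by rewrite ?eqxx scale1r Hr => /eqP.
  by rewrite scale0r mxrank0 => /eqP.
Qed.

End Gen.

Lemma sq_le1 (K : fieldType) d (A : 'M[K]_d) : (d <= 1)%N -> A = (\tr A)%:M.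
Proof.
case: d A => [|[|d]] A // _; first by rewrite !flatmx0.
apply/matrixP => i j; rewrite !ord1 !mxE /mxtrace big_ord1 eqxx mulr1n //.
Qed.

Lemma famcompZ (K : fieldType) r (M N : rep K r) a (x : 'rV[K]_(famdim M N)) i :
  famcomp (a *: x) i = a *: famcomp x i.
Proof. by have := famcompP a x 0 i; rewrite !addr0 /famcomp submxrow0 linear0 addr0. Qed.

Lemma famcomp_inj (K : fieldType) r (M N : rep K r) (x y : 'rV[K]_(famdim M N)) :
  (forall i, famcomp x i = famcomp y i) -> x = y.
Proof.
move=> H; apply/mxrowP => i; apply: (can_inj vec_mxK); exact: H.
Qed.

Lemma pathmx0 (K : fieldType) r (M : rep K r) i k j :
  (j < k)%N -> rdim M (iter j (@ordS r) i) = 0%N -> pathmx M i k = 0.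
Proof.
move=> Hj H0; elim: k Hj => [|k IH] //= Hj.
rewrite ltnS leq_eqVlt in Hj; case/orP: Hj => [/eqP Ej|jk]; last by rewrite IH // mul0mx.
subst j; by rewrite (mx_dim0 (pathmx M i k)) ?mul0mx //; right.
Qed.

Section MRep.
Variables (K : fieldType) (r : nat) (hr : (0 < r)%N) (s : 'I_r) (l : nat)
  (hl0 : (0 < l)%N) (hlr : (l < r)%N).

Definition Mrep : rep K r :=
  @Rep K r (fun i => (pos s i < l)%N : nat)
    (fun i => const_mx ((pos s i).+1 < l)%N%:R).

Lemma Mrep_nil : nilpotent_rep Mrep.
Proof.
exists r => i.
pose z := iter r.-1 (@ordS r) s.
apply: (@pathmx0 _ _ _ _ _ (pos i z)); first exact: (pos_lt hr).
rewrite (iter_pos hr) /= /z (pos_iter hr s r.-1) modn_small; last by lia.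
by have -> : (r.-1 < l)%N = false by lia.
Qed.

Lemma Mrep_brick : dimHom Mrep Mrep = 1%N.
Proof.
pose v := @mxrow K r (fun j => rdim Mrep j * rdim Mrep j)%N 1
   (fun j => mxvec (1%:M : 'M[K]_(rdim Mrep j))).
have fv : forall i, famcomp v i = 1%:M by move=> i; rewrite famcomp_mxrow.
apply: (@dimHom1 _ _ _ _ v).
- apply/eqP => v0; have := fv s; rewrite v0 /famcomp submxrow0 linear0.
  move/(congr1 mxrank); rewrite mxrank0 mxrank1 /= (pos_self hr); lia.
- by apply/dmap_eq0 => i; rewrite fv fv mulmx1 mul1mx.
move=> x /dmap_eq0 Hx.
pose t i := \tr (famcomp x i).
have ft : forall i, famcomp x i = (t i)%:M.
  by move=> i; apply: sq_le1; rewrite /=; case: (pos s i < l)%N.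
have Ht : forall k, (k < l)%N -> t (iter k (@ordS r) s) = t s.
  elim=> [//|k IH] Hk; rewrite -IH; last by lia.
  set i := iter k (@ordS r) s.
  have pi : pos s i = k by rewrite /i (pos_iter hr) modn_small //; lia.
  have pSi : pos s (ordS i) = k.+1 by rewrite (pos_ordS hr) pi modn_small //; lia.
  have := Hx i; rewrite !ft /= mul_mx_scalar mul_scalar_mx.
  have h1 : (0 < (pos s i < l)%N)%N by rewrite pi; case: ltnP => //; lia.
  have h2 : (0 < (pos s (ordS i) < l)%N)%N by rewrite pSi; case: ltnP => //; lia.
  move/matrixP => /(_ (Ordinal h1) (Ordinal h2)); rewrite !mxE pi.
  have -> : (k.+1 < l)%N by lia.
  by rewrite !mulr1.
have -> : x = t s *: v.
  apply: famcomp_inj => i; rewrite famcompZ fv scalemx1 ft.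
  case: (ltnP (pos s i) l) => hi.
  - by have := Ht _ hi; rewrite (iter_pos hr) => ->.
  - have d0 : rdim Mrep i = 0%N by rewrite /= ltnNge hi.
    by rewrite (mx_dim0 ((t i)%:M) (or_introl d0)) (mx_dim0 ((t s)%:M) (or_introl d0)).
by rewrite scalemx_sub.
Qed.

End MRep.

Lemma sum_l r (a : 'I_r) (f : 'I_r -> nat) : (\sum_(i < r) ((i == a) * f i) = f a)%N.
Proof.
rewrite (bigD1 a) //= eqxx mul1n big1 ?addn0 // => i /negbTE ->; by rewrite mul0n.
Qed.

Lemma sum_r r (a : 'I_r) (f : 'I_r -> nat) : (\sum_(i < r) (f i * (i == a)) = f a)%N.
Proof.
rewrite (bigD1 a) //= eqxx muln1 big1 ?addn0 // => i /negbTE ->; by rewrite muln0.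
Qed.

Lemma ordS_neq r (a b : 'I_r) : a != b -> ordS a != a.
Proof.
move=> ab; apply/eqP => /(congr1 val) /=.
have ha := ltn_ord a; have hb := ltn_ord b.
case: (ltnP a.+1 r) => h.
- rewrite modn_small //; lia.
- have -> : a.+1 = r by lia.
  rewrite modnn => a0; move: ab; have : (a : nat) = b by lia.
  by move/val_inj => ->; rewrite eqxx.
Qed.


Local Close Scope ring_scope.

Theorem lemma5p3 (K : closedFieldType) (r : nat) (hr : (0 < r)%N)
    (S1 S2 : rep K r) :
  nilpotent_rep S1 -> nilpotent_rep S2 ->
  simple_rep S1 -> simple_rep S2 -> ~ is_iso S1 S2 ->
  dimExt1 S1 S2 = 0%N ->
  exists M : rep K r,
    [/\ nilpotent_rep M, dimExt1 S1 M = 1%N, dimExt1 M S2 = 1%N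
      & brick_set [:: S1; S2; M]].
Proof.
move=> n1 n2 s1 s2 niso hext.
have [a [hS1 mS1]] := simple_nil n1 s1.
have [b [hS2 mS2]] := simple_nil n2 s2.
have ab : a != b.
  apply/eqP => eab; subst b; apply: niso.
  exists (fun i => pid_mx 1), (fun i => pid_mx 1); split.
  - by move=> i; rewrite mS1 mS2 mul0mx mulmx0.
  - by move=> i; rewrite mS1 mS2 mul0mx mulmx0.
  - move=> i; rewrite mul_pid_mx.
    have -> : minn (rdim S2 i) (minn 1 1) = rdim S1 i by rewrite hS1 hS2; case: (i == a).
    by rewrite pid_mx_1.
  - move=> i; rewrite mul_pid_mx.
    have -> : minn (rdim S1 i) (minn 1 1) = rdim S2 i by rewrite hS1 hS2; case: (i == a).
    by rewrite pid_mx_1.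
have Sa : ordS a != a by apply: ordS_neq ab.
have Sb : ordS b != b by apply: (@ordS_neq _ b a); rewrite eq_sym.
have Sab : ordS a != b.
  move: hext; rewrite dimExt_famdim0; last first.
    by rewrite /famdim; under eq_bigr => i _ do rewrite hS1 hS2; rewrite sum_l (negbTE ab).
  rewrite /famdim1; under eq_bigr => i _ do rewrite hS1 hS2; rewrite sum_l.
  by case: (ordS a == b).
set s := ordS a.
set l := pos s b.
have pa : pos s a = r.-1.
  have := pos_ordS hr s a; rewrite -/s (pos_self hr).
  have := pos_lt hr s a; case: (ltnP (pos s a).+1 r) => h1 h2.
  - by rewrite modn_small.
  - lia.
have l0 : (0 < l)%N.
  rewrite lt0n; apply/eqP => E; move: Sab; rewrite -/s.
  have -> : b = s by apply: (@pos_inj _ hr s); rewrite (pos_self hr); exact: E.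
  by rewrite eqxx.
have lr : (l < r.-1)%N.
  have := pos_lt hr s b; rewrite -/l => h.
  have : l != r.-1.
    apply/eqP => E; move: ab; rewrite -pa in E.
    have -> : b = a by apply: (@pos_inj _ hr s); exact: E.
    by rewrite eqxx.
  lia.
have lr' : (l < r)%N by lia.
have pb : (pos s b < l)%N = false by rewrite -/l ltnn.
have pa' : (pos s a < l)%N = false by rewrite pa; apply/negbTE; rewrite -leqNgt; lia.
exists (Mrep K s l); split.
- exact: Mrep_nil.
- rewrite dimExt_famdim0; last first.
    by rewrite /famdim; under eq_bigr => i _ do rewrite !hS1; rewrite sum_l /= pa'.
  rewrite /famdim1; under eq_bigr => i _ do rewrite !hS1; rewrite sum_l /= -/s (pos_self hr) l0.
  done.
- rewrite dimExt_famdim0; last first.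
    by rewrite /famdim; under eq_bigr => i _ do rewrite !hS2; rewrite sum_r /= pb.
  rewrite /famdim1; under eq_bigr => i _ do rewrite hS2 ordS_eq; rewrite sum_r /=.
  have := pos_ordS hr s (ord_pred b); rewrite ord_predK -/l.
  have := pos_lt hr s (ord_pred b).
  case: (ltnP (pos s (ord_pred b)).+1 r) => h1 h2.
  + rewrite modn_small // => E; have -> : (pos s (ord_pred b) < l)%N by lia. done.
  + have -> : (pos s (ord_pred b)).+1 = r by lia.
    rewrite modnn => E; lia.
- move=> [|[|[|i]]] [|[|[|j]]] //= _ _.
  + rewrite dimHom_famdim1_0.
      by rewrite /famdim; under eq_bigr => i _ do rewrite !hS1; rewrite sum_l eqxx.
    by rewrite /famdim1; under eq_bigr => i _ do rewrite !hS1; rewrite sum_l (negbTE Sa).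
  + apply: dimHom_famdim0.
    by rewrite /famdim; under eq_bigr => i _ do rewrite hS1 hS2; rewrite sum_l (negbTE ab).
  + apply: dimHom_famdim0.
    by rewrite /famdim; under eq_bigr => i _ do rewrite !hS1; rewrite sum_l /= pa'.
  + apply: dimHom_famdim0.
    by rewrite /famdim; under eq_bigr => i _ do rewrite hS1 hS2; rewrite sum_l eq_sym (negbTE ab).
  + rewrite dimHom_famdim1_0.
      by rewrite /famdim; under eq_bigr => i _ do rewrite !hS2; rewrite sum_l eqxx.
    by rewrite /famdim1; under eq_bigr => i _ do rewrite !hS2; rewrite sum_l (negbTE Sb).
  + apply: dimHom_famdim0.
    by rewrite /famdim; under eq_bigr => i _ do rewrite !hS2; rewrite sum_l /= pb.
  + apply: dimHom_famdim0.
    by rewrite /famdim; under eq_bigr => i _ do rewrite !hS1; rewrite sum_r /= pa'.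
  + apply: dimHom_famdim0.
    by rewrite /famdim; under eq_bigr => i _ do rewrite !hS2; rewrite sum_r /= pb.
  + exact: Mrep_brick.
Qed.
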